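(* Let $\mathbb{F}\in\{\mathbb{R},\mathbb{C}\}$, let $k\in\{1,\dots,n\}$ be an integer and let $r>0$. Suppose $\boldsymbol A\in\mathbb{F}^{m\times n}$ satisfies the phaseless bi-Lipschitz condition on $\mathcal X=\{\boldsymbol x\in\mathbb{F}^n:\|\boldsymbol x\|_0\le(r+4)k\}$ with positive constants $L,U$, and $r>2(U/L)^2$. Then for all $\boldsymbol x\in\mathbb{F}^n$, all $\eta\ge0$, all $\boldsymbol e\in\mathbb{R}^m$ with $\|\boldsymbol e\|_2\le\eta$, and any $\boldsymbol x^\#\in\Delta_{1,\eta}(|\boldsymbol A\boldsymbol x|+\boldsymbol e)$, \[ \mathrm{dist}_1(\boldsymbol x^\#,\boldsymbol x)\le C_1\,\sigma_k(\boldsymbol x)_1+D_1\sqrt k\,\eta,\qquad \mathrm{dist}(\boldsymbol x^\#,\boldsymbol x)\le C_2\,\frac{\sigma_k(\boldsymbol x)_1}{\sqrt k}+D_2\,\eta, \] where \[ C_1=\frac{2\frac UL\big(r^{-1/2}+1\big)(2+r)^{1/2}}{1-\frac UL(2/r)^{1/2}}+2,\quad D_1=\frac1L\cdot\frac{2(2+r)^{1/2}}{1-\frac UL(2/r)^{1/2}}, \] \[ C_2=\frac{\frac UL\big(r^{-1/2}+1\big)\big(1+(r/2)^{-1/2}\big)}{1-\frac UL(2/r)^{1/2}}+r^{-1/2}+1,\quad D_2=\frac1L\cdot\frac{2\big(1+(r/2)^{-1/2}\big)}{1-\frac UL(2/r)^{1/2}}. \]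
   Context: $\mathbb{F}\in\{\mathbb{R},\mathbb{C}\}$. $\|\boldsymbol u\|_q$ is the usual $\ell_q$ norm, $\|\boldsymbol u\|_0$ the number of nonzero entries, $|\boldsymbol u|$ the vector of entrywise moduli. $\mathrm{dist}_q(\boldsymbol x,\boldsymbol y)=\min_{c\in\mathbb{F},|c|=1}\|\boldsymbol x-c\boldsymbol y\|_q$, $\mathrm{dist}=\mathrm{dist}_2$. $\Sigma_k=\{\boldsymbol z\in\mathbb{F}^n:\|\boldsymbol z\|_0\le k\}$, $\sigma_k(\boldsymbol x)_q=\min_{\boldsymbol z\in\Sigma_k}\mathrm{dist}_q(\boldsymbol x,\boldsymbol z)$. $\boldsymbol A$ satisfies the phaseless bi-Lipschitz condition on $\mathcal X$ with positive constants $L,U$ if $L\,\mathrm{dist}(\boldsymbol x,\boldsymbol y)\le\||\boldsymbol A\boldsymbol x|-|\boldsymbol A\boldsymbol y|\|_2\le U\,\mathrm{dist}(\boldsymbol x,\boldsymbol y)$ for all $\boldsymbol x,\boldsymbol y\in\mathcal X$. $\Delta_{1,\eta}(\boldsymbol y)=\operatorname{argmin}_{\boldsymbol z\in\mathbb{F}^n}\{\|\boldsymbol z\|_1:\||\boldsymbol A\boldsymbol z|-\boldsymbol y\|_2\le\eta\}$. *)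

(* Defs.v *)
From mathcomp Require Import all_boot all_order all_algebra.
From mathcomp Require Import classical_sets reals.
From mathcomp.real_closed Require Import complex.
Set Implicit Arguments. Unset Strict Implicit. Unset Printing Implicit Defensive.
Import Order.TTheory GRing.Theory Num.Theory.
Local Open Scope ring_scope.

(* Everything is parameterized by the scalar field F and its modulus
   md : F -> R; it is instantiated below only with F = R (md = `|.|)
   and F = R[i] (md = complex modulus normc). *)
Section Defs.
Variables (R : realType) (F : pzRingType) (md : F -> R).

Definition vabs n (u : 'cV[F]_n) : 'cV[R]_n := \col_i md (u i ord0).
Definition norm1 n (u : 'cV[F]_n) : R := \sum_i md (u i ord0).
Definition norm2 n (u : 'cV[F]_n) : R := Num.sqrt (\sum_i md (u i ord0) ^+ 2).
Definition rnorm2 n (v : 'cV[R]_n) : R := Num.sqrt (\sum_i v i ord0 ^+ 2).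
Definition norm0 n (u : 'cV[F]_n) : nat := #|[set i | u i ord0 != 0]|.

(* dist_q(x,y) = min_{|c|=1} ||x - c y||_q  (written as an infimum; the
   minimum is attained by compactness of the unit circle) *)
Definition dist1 n (x y : 'cV[F]_n) : R :=
  inf [set d | exists c : F, md c = 1 /\ d = norm1 (x - c *: y)].
Definition dist2 n (x y : 'cV[F]_n) : R :=
  inf [set d | exists c : F, md c = 1 /\ d = norm2 (x - c *: y)].

Definition sigma1 (k : nat) n (x : 'cV[F]_n) : R :=
  inf [set d | exists z : 'cV[F]_n, (norm0 z <= k)%N /\ d = dist1 x z].

Definition phaseless_biLipschitz m n (A : 'M[F]_(m, n))
    (X : set 'cV[F]_n) (L U : R) :=
  forall x y, X x -> X y ->
    L * dist2 x y <= rnorm2 (vabs (A *m x) - vabs (A *m y)) <= U * dist2 x y.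

Definition in_Delta1 m n (A : 'M[F]_(m, n)) (eta : R) (y : 'cV[R]_m)
    (xs : 'cV[F]_n) :=
  rnorm2 (vabs (A *m xs) - y) <= eta /\
  forall z : 'cV[F]_n, rnorm2 (vabs (A *m z) - y) <= eta -> norm1 xs <= norm1 z.

Definition corollary_claim : Prop :=
  forall (m n k : nat) (r L U : R) (A : 'M[F]_(m, n)),
    (1 <= k <= n)%N -> 0 < r -> 0 < L -> 0 < U ->
    phaseless_biLipschitz A [set x | (norm0 x)%:R <= (r + 4) * k%:R] L U ->
    r > 2 * (U / L) ^+ 2 ->
    let q := 1 - U / L * Num.sqrt (2 / r) in
    let C1 := 2 * (U / L) * ((Num.sqrt r)^-1 + 1) * Num.sqrt (2 + r) / q + 2 in
    let D1 := L^-1 * (2 * Num.sqrt (2 + r) / q) in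
    let C2 := U / L * ((Num.sqrt r)^-1 + 1) * (1 + (Num.sqrt (r / 2))^-1) / q
              + (Num.sqrt r)^-1 + 1 in
    let D2 := L^-1 * (2 * (1 + (Num.sqrt (r / 2))^-1) / q) in
    forall (x : 'cV[F]_n) (eta : R) (e : 'cV[R]_m) (xs : 'cV[F]_n),
      0 <= eta -> rnorm2 e <= eta ->
      in_Delta1 A eta (vabs (A *m x) + e) xs ->
      dist1 xs x <= C1 * sigma1 k x + D1 * Num.sqrt k%:R * eta /\
      dist2 xs x <= C2 * sigma1 k x / Num.sqrt k%:R + D2 * eta.
End Defs.

(* Main.v *)
Require Import Defs.
From mathcomp Require Import all_boot all_order all_algebra.
From mathcomp Require Import classical_sets reals.
From mathcomp.real_closed Require Import complex.
From mathcomp Require Import lra ring zify.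
From Stdlib Require Import Lia.
Set Implicit Arguments. Unset Strict Implicit. Unset Printing Implicit Defensive.
Import Order.TTheory GRing.Theory Num.Theory.
Local Open Scope ring_scope.

Section RealSums.
Variable R : realType.
Variables (I : finType).
Implicit Types f g : I -> R.

Lemma sum_prod f g : \sum_i \sum_j f i * g j = (\sum_i f i) * (\sum_j g j).
Proof. by rewrite mulr_suml; apply: eq_bigr => i _; rewrite mulr_sumr. Qed.

Lemma lagrange f g :
  \sum_i \sum_j (f i * g j - f j * g i) ^+ 2 =
  2 * ((\sum_i f i ^+ 2) * (\sum_i g i ^+ 2)
       - (\sum_i f i * g i) ^+ 2).
Proof.
have E : forall i j, (f i * g j - f j * g i) ^+ 2 =
   f i ^+ 2 * g j ^+ 2 + g i ^+ 2 * f j ^+ 2 - 2 * ((f i * g i) * (f j * g j)).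
  by move=> i j; ring.
under eq_bigr do under eq_bigr do rewrite E.
under eq_bigr do rewrite sumrB big_split /=.
rewrite sumrB big_split /= !sum_prod.
under eq_bigr do rewrite -mulr_sumr.
rewrite -mulr_sumr sum_prod.
ring.
Qed.

Lemma CS f g : (\sum_i f i * g i) ^+ 2 <= (\sum_i f i ^+ 2) * (\sum_i g i ^+ 2).
Proof.
have : 0 <= \sum_i \sum_j (f i * g j - f j * g i) ^+ 2.
  by apply: sumr_ge0 => i _; apply: sumr_ge0 => j _; apply: sqr_ge0.
rewrite lagrange; lra.
Qed.
End RealSums.
Section Tops.
Variable R : realType.
Variable I : finType.

Lemma ext_subset (W : {set I}) m : forall (Z : {set I}),
  Z \subset W -> (#|Z| <= m <= #|W|)%N ->
  exists T : {set I}, [/\ Z \subset T, T \subset W & #|T| = m].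
Proof.
move=> Z; move Hd : (m - #|Z|)%N => d; elim: d Z Hd => [|d IH] Z Hd ZW /andP[Zm mW].
  exists Z; split => //; lia.
have /set0Pn [i Hi] : W :\: Z != finset.set0.
  apply/negP => /eqP H; have : W \subset Z by rewrite -finset.setD_eq0 H.
  move/subset_leq_card; lia.
move: Hi; rewrite inE => /andP[iZ iW].
have [|||T [ZT TW cT]] := IH (i |: Z).
- by rewrite cardsU1 iZ; lia.
- by rewrite finset.subUset finset.sub1set iW ZW.
- by rewrite cardsU1 iZ mW andbT; lia.
exists T; split => //; apply: fintype.subset_trans ZT; exact: finset.subsetUr.
Qed.

Lemma top_exists (f : I -> R) (W : {set I}) (a : nat) :
  exists T : {set I}, [/\ T \subset W, #|T| = minn a #|W|,
    forall i j, i \in W -> i \notin T -> j \in T -> f i <= f j &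
    forall T' : {set I}, T' \subset W -> #|T'| = minn a #|W| ->
       \sum_(i in T') f i <= \sum_(i in T) f i].
Proof.
pose P := fun T : {set I} => (T \subset W) && (#|T| == minn a #|W|).
have [T0 [_ T0W cT0]] : exists T : {set I}, [/\ finset.set0 \subset T, T \subset W & #|T| = minn a #|W|].
  apply: (ext_subset (finset.sub0set W)); by rewrite finset.cards0 geq_minr.
have PT0 : P T0 by rewrite /P T0W cT0 eqxx.
case: (@arg_maxP _ R _ T0 P (fun T => \sum_(i in T) f i) PT0) => T /andP[TW /eqP cT] Tmax.
exists T; split => //; last first.
  by move=> T' T'W cT'; apply: Tmax; rewrite /P T'W cT' eqxx.
move=> i j iW iT jT.
pose T' := i |: (T :\ j).
have PT' : P T'.
  rewrite /P /T' finset.subUset finset.sub1set iW (fintype.subset_trans (subD1set _ _)) //=.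
  rewrite cardsU1 in_setD1 (negbTE iT) andbF /= -cT (cardsD1 j T) jT; lia.
have := Tmax _ PT'.
rewrite /T' big_setU1 /=; last by rewrite in_setD1 (negbTE iT) andbF.
rewrite [X in _ <= X](big_setD1 j) //=; lra.
Qed.

Lemma top_bound (f : I -> R) (W T : {set I}) (a : nat) i :
  T \subset W -> #|T| = minn a #|W| ->
  (forall i j, i \in W -> i \notin T -> j \in T -> f i <= f j) ->
  i \in W -> i \notin T -> a%:R * f i <= \sum_(j in T) f j.
Proof.
move=> TW cT Hm iW iT.
have ca : #|T| = a.
  rewrite cT; apply/minn_idPl.
  have : T \proper W by rewrite finset.properEneq TW andbT; apply/eqP => E; move: iT; rewrite E iW.
  by move/proper_card; rewrite cT; lia.
rewrite -ca mulr_natl -sumr_const; apply: ler_sum => j jT; exact: Hm.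
Qed.
End Tops.
Section L2.
Variable R : realType.
Variable I : finType.
Implicit Types f g : I -> R.

Definition l2 f := Num.sqrt (\sum_i f i ^+ 2).

Lemma l2_ge0 f : 0 <= l2 f. Proof. exact: sqrtr_ge0. Qed.

Lemma sqrt_le (x y : R) : 0 <= y -> x <= y ^+ 2 -> Num.sqrt x <= y.
Proof.
move=> y0 xy; apply: (le_trans (ler_wsqrtr xy)).
by rewrite sqrtr_sqr ger0_norm.
Qed.

Lemma l2_sq f : l2 f ^+ 2 = \sum_i f i ^+ 2.
Proof. by rewrite sqr_sqrtr // sumr_ge0 // => i _; exact: sqr_ge0. Qed.

Lemma l2D f g : l2 (fun i => f i + g i) <= l2 f + l2 g.
Proof.
apply: sqrt_le; first by rewrite addr_ge0 ?l2_ge0.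
have H1 := CS f g.
rewrite -(l2_sq f) -(l2_sq g) in H1.
have H2 : \sum_i f i * g i <= l2 f * l2 g.
  rewrite -exprMn in H1.
  have p0 : 0 <= l2 f * l2 g by rewrite mulr_ge0 ?l2_ge0.
  case: (lerP (\sum_i f i * g i) (l2 f * l2 g)) => // hlt; nra.
have -> : \sum_i (f i + g i) ^+ 2 = \sum_i f i ^+ 2 + \sum_i g i ^+ 2 + 2 * \sum_i f i * g i.
  rewrite mulr_sumr -!big_split /=; apply: eq_bigr => i _; ring.
rewrite -(l2_sq f) -(l2_sq g); nra.
Qed.

Lemma l2_le f g : (forall i, `|f i| <= g i) -> l2 f <= l2 g.
Proof.
move=> H; apply: ler_wsqrtr; apply: ler_sum => i _.
have := H i; rewrite ler_norml => /andP[h1 h2]; nra.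
Qed.

Lemma l1_l2 f (S : {set I}) : (forall i, 0 <= f i) ->
  \sum_(i in S) f i <= Num.sqrt (#|S|%:R) * Num.sqrt (\sum_(i in S) f i ^+ 2).
Proof.
move=> f0.
pose fS := fun i => if i \in S then f i else 0.
pose oS := fun i => if i \in S then 1 else 0 : R.
have E1 : \sum_(i in S) f i = \sum_i fS i * oS i.
  by rewrite big_mkcond /=; apply: eq_bigr => i _; rewrite /fS /oS; case: (i \in S); rewrite ?mulr1 ?mulr0 //.
have E2 : \sum_(i in S) f i ^+ 2 = \sum_i fS i ^+ 2.
  by rewrite big_mkcond /=; apply: eq_bigr => i _; rewrite /fS; case: (i \in S); rewrite ?expr0n //.
have E3 : (#|S|%:R : R) = \sum_i oS i ^+ 2.
  rewrite -sumr_const big_mkcond /=; apply: eq_bigr => i _; rewrite /oS; case: (i \in S); rewrite ?expr0n ?expr1n //.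
have H := CS fS oS.
rewrite -(@sqrtrM R) ?ler0n //; apply: (le_trans (ler_norm _)).
rewrite -sqrtr_sqr; apply: ler_wsqrtr.
by rewrite E1 E2 E3 mulrC.
Qed.

Lemma sq_bound f (W : {set I}) M : (forall i, i \in W -> 0 <= f i <= M) ->
  \sum_(i in W) f i ^+ 2 <= M * \sum_(i in W) f i.
Proof.
move=> H; rewrite mulr_sumr; apply: ler_sum => i iW.
have /andP[h1 h2] := H i iW; nra.
Qed.

Lemma sum_set_mk f (S : {set I}) :
  \sum_(i in S) f i = \sum_i (if i \in S then f i else 0).
Proof. by rewrite big_mkcond. Qed.

End L2.

Section Final.
Variable R : realType.

Lemma sqrt_mono (x y : R) : x <= y -> Num.sqrt x <= Num.sqrt y.
Proof. exact: ler_wsqrtr. Qed.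

Lemma final_alg (r L U kk a eta sig sig' Z d dd1 dd2 : R) :
  1 <= kk -> 0 < r -> 0 < L -> 0 < U -> r > 2 * (U / L) ^+ 2 ->
  r * kk <= a -> a <= r * kk + kk ->
  0 <= eta -> 0 <= sig' -> sig' <= sig -> 0 <= d -> 0 <= Z ->
  L * d <= 2 * eta + U * Z / Num.sqrt a + U * sig' / Num.sqrt kk ->
  Z <= Num.sqrt kk * d + sig' ->
  dd2 <= d + Z / Num.sqrt a + sig' / Num.sqrt kk ->
  dd1 <= 2 * Num.sqrt kk * d + 2 * sig' -> L <= U ->
  let q := 1 - U / L * Num.sqrt (2 / r) in
  let C1 := 2 * (U / L) * ((Num.sqrt r)^-1 + 1) * Num.sqrt (2 + r) / q + 2 in
  let D1 := L^-1 * (2 * Num.sqrt (2 + r) / q) in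
  let C2 := U / L * ((Num.sqrt r)^-1 + 1) * (1 + (Num.sqrt (r / 2))^-1) / q
            + (Num.sqrt r)^-1 + 1 in
  let D2 := L^-1 * (2 * (1 + (Num.sqrt (r / 2))^-1) / q) in
  dd1 <= C1 * sig + D1 * Num.sqrt kk * eta /\
  dd2 <= C2 * sig / Num.sqrt kk + D2 * eta.
Proof.
move=> k1 r0 L0 U0 hr ha1 ha2 eta0 s'0 ss' d0 Z0 h1 h2 h3 h4 LU; cbv zeta.
have kk0 : 0 < kk by lra.
have a0 : 0 < a by nra.
have sk0 : 0 < Num.sqrt kk by rewrite sqrtr_gt0.
have sa0 : 0 < Num.sqrt a by rewrite sqrtr_gt0.
have sr0 : 0 < Num.sqrt r by rewrite sqrtr_gt0.
have skk : Num.sqrt kk ^+ 2 = kk by rewrite sqr_sqrtr // ltW.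
have saa : Num.sqrt a ^+ 2 = a by rewrite sqr_sqrtr // ltW.
have srr : Num.sqrt r ^+ 2 = r by rewrite sqr_sqrtr // ltW.
have hw : (Num.sqrt (r / 2))^-1 = Num.sqrt (2 / r).
  by rewrite -sqrtrV ?divr_ge0 ?ltW // invf_div.
rewrite hw {hw}.
set sk := Num.sqrt kk in h1 h2 h3 h4 sk0 skk *.
set sa := Num.sqrt a in h1 h3 sa0 saa *.
set sr := Num.sqrt r in sr0 srr *.
set w := Num.sqrt (2 / r).
have w0 : 0 <= w by exact: sqrtr_ge0.
have ww : w ^+ 2 = 2 / r by rewrite sqr_sqrtr // divr_ge0 // ltW.
have hsa : sr * sk <= sa.
  by have := sqrt_mono ha1; rewrite (sqrtrM _ (ltW r0)).
set rho := sr^-1.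
have rho0 : 0 < rho by rewrite invr_gt0.
have rhosr : rho * sr = 1 by rewrite mulVf // gt_eqF.
have rr : rho ^+ 2 * r = 1 by rewrite -srr -exprMn rhosr expr1n.
have ww' : w ^+ 2 * r = 2 by rewrite ww mulrAC -mulrA mulfV ?mulr1 // gt_eqF.
have rhow : rho <= w.
  case: (lerP rho w) => // hlt.
  have : w ^+ 2 < rho ^+ 2 by nra.
  nra.
have ULp : 0 < U / L by rewrite divr_gt0.
have hq : U / L * w < 1.
  have : (U / L * w) ^+ 2 < 1.
    rewrite exprMn; nra.
  have : 0 <= U / L * w by rewrite mulr_ge0 // ltW.
  nra.
have q0 : 0 < 1 - U / L * w by lra.
have Lq : L * (1 - U / L * w) = L - U * w.
  by rewrite mulrBr mulr1 mulrA mulrCA divff ?mulr1 // gt_eqF.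
have hsk_sa : sk / sa <= rho.
  rewrite ler_pdivrMr // /rho; rewrite -[sk]mul1r -rhosr -mulrA.
  by apply: ler_wpM2l; [exact: ltW | exact: hsa].
have hinv_sa : 1 / sa <= rho / sk.
  rewrite ler_pdivrMr // mulrAC ler_pdivlMr //.
  by rewrite mul1r; move: hsk_sa; rewrite ler_pdivrMr.
have ht : Z / sa <= rho * d + rho * sig' / sk.
  apply: (@le_trans _ _ ((sk * d + sig') / sa)).
    by rewrite ler_pM2r ?invr_gt0.
  rewrite mulrDl.
  have e1 : sk * d / sa = (sk / sa) * d by rewrite mulrAC.
  have e2 : sig' / sa = (1 / sa) * sig' by rewrite mul1r mulrC.
  have e3 : rho * sig' / sk = (rho / sk) * sig' by rewrite mulrAC.
  rewrite e1 e2 e3.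
  have := ler_wpM2r d0 hsk_sa; have := ler_wpM2r s'0 hinv_sa; lra.
set N := 2 * eta + U * (rho + 1) * sig / sk.
have hd : (L - U * w) * d <= N.
  have e4 : U * Z / sa = U * (Z / sa) by rewrite mulrA.
  rewrite e4 in h1.
  have : U * (Z / sa) <= U * (rho * d + rho * sig' / sk) by rewrite ler_pM2l.
  have : U * sig' / sk <= U * sig / sk.
    by rewrite ler_pM2r ?invr_gt0 // ler_pM2l.
  have : U * rho * d <= U * w * d by rewrite ler_wpM2r // ler_pM2l.
  rewrite /N.
  have e5 : U * (rho + 1) * sig / sk = U * rho * (sig / sk) + U * sig / sk.
    by ring.
  have e6 : U * (rho * d + rho * sig' / sk) = U * rho * d + U * rho * (sig' / sk).
    by ring.
  have : U * rho * (sig' / sk) <= U * rho * (sig / sk).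
    by rewrite ler_pM2l ?mulr_gt0 // ler_pM2r ?invr_gt0.
  rewrite e5 e6; lra.
have LqP : 0 < L - U * w by rewrite -Lq mulr_gt0.
have hdN : d <= N / (L - U * w) by rewrite ler_pdivlMr // mulrC.
have N0 : 0 <= N.
  have sig0 : 0 <= sig by lra.
  rewrite /N; apply: addr_ge0; first by rewrite mulr_ge0 // ler0n.
  apply: divr_ge0; last exact: ltW sk0.
  apply: mulr_ge0 => //; apply: mulr_ge0; [exact: ltW | lra].
have hZ2 : Z <= sk * d + sig by lra.
split.
-
  set v := Num.sqrt (2 + r).
  have v0 : 0 <= v by exact: sqrtr_ge0.
  have vv : v ^+ 2 = 2 + r by rewrite sqr_sqrtr // addr_ge0 // ltW.
  have r2 : 2 <= r.
    have : (U / L) ^+ 2 >= 1.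
      have : 1 <= U / L by rewrite ler_pdivlMr // mul1r.
      move=> h; nra.
    nra.
  have v2 : 2 <= v.
    case: (lerP 2 v) => // hlt; nra.
  have sig0 : 0 <= sig by lra.
  have hd1 : dd1 <= 2 * sk * (N / (L - U * w)) + 2 * sig.
    have := ler_wpM2l (ltW sk0) hdN; lra.
  apply: (le_trans hd1).
  have E1 : 2 * sk * (N / (L - U * w)) =
     (4 * sk * eta + 2 * U * (rho + 1) * sig) / (L - U * w).
    rewrite /N; field; by rewrite !gt_eqF.
  have E2 : (2 * (U / L) * (rho + 1) * v / (1 - U / L * w) + 2) * sig +
      L^-1 * (2 * v / (1 - U / L * w)) * sk * eta =
     (2 * v * sk * eta + 2 * v * U * (rho + 1) * sig) / (L - U * w) + 2 * sig.
    rewrite -Lq; field; by rewrite !gt_eqF.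
  rewrite E1 E2 lerD2r ler_pM2r ?invr_gt0 //.
  have : 0 <= U * (rho + 1) * sig by apply: mulr_ge0 => //; apply: mulr_ge0; [exact: ltW | lra].
  have : 0 <= sk * eta by rewrite mulr_ge0 // ltW.
  nra.
-
  have hd2 : dd2 <= (1 + w) * d + (rho + 1) * sig / sk.
    have e7 : (rho + 1) * sig / sk = rho * (sig / sk) + sig / sk by ring.
    have : sig' / sk <= sig / sk by rewrite ler_pM2r ?invr_gt0.
    have : rho * (sig' / sk) <= rho * (sig / sk) by rewrite ler_pM2l // ler_pM2r ?invr_gt0.
    have : rho * d <= w * d by rewrite ler_wpM2r.
    have e8 : rho * sig' / sk = rho * (sig' / sk) by rewrite mulrA.
    rewrite e7; rewrite e8 in ht; lra.
  apply: (le_trans hd2); apply: (@le_trans _ _ ((1 + w) * (N / (L - U * w)) + (rho + 1) * sig / sk)).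
    by rewrite lerD2r ler_wpM2l // addr_ge0.
  rewrite le_eqVlt; apply/orP; left; apply/eqP.
  rewrite /N -Lq; field; by rewrite !gt_eqF.
Qed.
End Final.

Section Gen.
Variables (R : realType) (F : pzRingType) (md : F -> R).
Hypotheses (md0 : md 0 = 0) (mdN : forall a, md (- a) = md a)
  (mdD : forall a b, md (a + b) <= md a + md b)
  (mdM : forall a b, md (a * b) = md a * md b)
  (md_ge0 : forall a, 0 <= md a) (md1 : md 1 = 1).

Definition res n (S : {set 'I_n}) (v : 'cV[F]_n) : 'cV[F]_n :=
  \col_i (if i \in S then v i ord0 else 0).

Lemma norm2E n (v : 'cV[F]_n) : norm2 md v = l2 (fun i => md (v i ord0)).
Proof. by []. Qed.
Lemma rnorm2E n (v : 'cV[R]_n) : rnorm2 v = l2 (fun i => v i ord0).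
Proof. by []. Qed.

Lemma norm1_ge0 n (v : 'cV[F]_n) : 0 <= norm1 md v.
Proof. by apply: sumr_ge0. Qed.
Lemma norm2_ge0 n (v : 'cV[F]_n) : 0 <= norm2 md v.
Proof. exact: sqrtr_ge0. Qed.
Lemma rnorm2_ge0 n (v : 'cV[R]_n) : 0 <= rnorm2 v.
Proof. exact: sqrtr_ge0. Qed.

Lemma l2_le0 (I : finType) (f g : I -> R) : (forall i, 0 <= f i <= g i) -> l2 f <= l2 g.
Proof.
move=> H; apply: l2_le => i; have /andP[h1 h2] := H i; by rewrite ger0_norm.
Qed.

Lemma norm2D n (u v : 'cV[F]_n) : norm2 md (u + v) <= norm2 md u + norm2 md v.
Proof.
rewrite !norm2E; apply: le_trans (l2D _ _); apply: l2_le => i.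
by rewrite mxE ger0_norm.
Qed.

Lemma norm1D n (u v : 'cV[F]_n) : norm1 md (u + v) <= norm1 md u + norm1 md v.
Proof. by rewrite /norm1 -big_split /=; apply: ler_sum => i _; rewrite mxE; exact: mdD. Qed.

Lemma rnorm2D n (u v : 'cV[R]_n) : rnorm2 (u + v) <= rnorm2 u + rnorm2 v.
Proof.
rewrite !rnorm2E.
have E : forall w : 'cV[R]_n, l2 (fun i => w i ord0) = l2 (fun i => `|w i ord0|).
  by move=> w; rewrite /l2; congr Num.sqrt; apply: eq_bigr => i _; rewrite real_normK ?num_real.
rewrite (E (u + v)) (E u) (E v); apply: le_trans (l2D _ _); apply: l2_le0 => i.
rewrite mxE; apply/andP; split; [exact: normr_ge0 | exact: ler_normD].
Qed.

Lemma norm2N n (v : 'cV[F]_n) : norm2 md (- v) = norm2 md v.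
Proof. by rewrite /norm2; congr Num.sqrt; apply: eq_bigr => i _; rewrite mxE mdN. Qed.
Lemma norm1N n (v : 'cV[F]_n) : norm1 md (- v) = norm1 md v.
Proof. by rewrite /norm1; apply: eq_bigr => i _; rewrite mxE mdN. Qed.
Lemma rnorm2N n (v : 'cV[R]_n) : rnorm2 (- v) = rnorm2 v.
Proof. by rewrite /rnorm2; congr Num.sqrt; apply: eq_bigr => i _; rewrite mxE sqrrN. Qed.
Lemma norm2Z n c (v : 'cV[F]_n) : md c = 1 -> norm2 md (c *: v) = norm2 md v.
Proof. by move=> hc; rewrite /norm2; congr Num.sqrt; apply: eq_bigr => i _; rewrite mxE mdM hc mul1r. Qed.
Lemma norm1Z n c (v : 'cV[F]_n) : md c = 1 -> norm1 md (c *: v) = norm1 md v.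
Proof. by move=> hc; rewrite /norm1; apply: eq_bigr => i _; rewrite mxE mdM hc mul1r. Qed.

Lemma norm2_res n S (v : 'cV[F]_n) :
  norm2 md (res S v) = Num.sqrt (\sum_(i in S) md (v i ord0) ^+ 2).
Proof.
rewrite /norm2 [in RHS]big_mkcond /=; congr Num.sqrt; apply: eq_bigr => i _.
by rewrite mxE; case: (i \in S); rewrite ?md0 ?expr0n.
Qed.
Lemma norm1_res n S (v : 'cV[F]_n) :
  norm1 md (res S v) = \sum_(i in S) md (v i ord0).
Proof.
rewrite /norm1 [in RHS]big_mkcond /=; apply: eq_bigr => i _.
by rewrite mxE; case: (i \in S); rewrite ?md0.
Qed.

Lemma norm0_res n S (v : 'cV[F]_n) : (norm0 (res S v) <= #|S|)%N.
Proof.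
apply: subset_leq_card; apply/fintype.subsetP => i; rewrite inE mxE.
by case: (i \in S); rewrite ?eqxx.
Qed.

Lemma res_split n (W T : {set 'I_n}) v : T \subset W ->
  res W v = res T v + res (W :\: T) v.
Proof.
move=> TW; apply/matrixP => i j; rewrite (ord1 j) !mxE ?inE.
case iT : (i \in T); case iW : (i \in W) => //=; rewrite ?addr0 ?add0r //.
by move/fintype.subsetP: TW => /(_ i); rewrite iT iW => /(_ isT).
Qed.

Lemma res_compl n (S : {set 'I_n}) v : v = res S v + res (~: S) v.
Proof.
apply/matrixP => i j; rewrite (ord1 j) !mxE ?inE.
by case: (i \in S); rewrite ?addr0 ?add0r.
Qed.

Lemma res_lin n (S : {set 'I_n}) (u v : 'cV[F]_n) c :
  res S (u - c *: v) = res S u - c *: res S v.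
Proof.
apply/matrixP => i j; rewrite (ord1 j) !mxE.
by case: (i \in S); rewrite ?mulr0 ?subr0.
Qed.

Section WithA.
Variables (m n : nat) (A : 'M[F]_(m, n)).
Definition nA (v : 'cV[F]_n) := rnorm2 (vabs md (A *m v)).

Lemma nA_ge0 v : 0 <= nA v. Proof. exact: rnorm2_ge0. Qed.

Lemma nA_add u v : nA (u + v) <= nA u + nA v.
Proof.
rewrite /nA !rnorm2E; apply: le_trans (l2D _ _); apply: l2_le => i.
by rewrite mulmxDr !mxE ger0_norm //; exact: mdD.
Qed.

Variables (U : R) (a : nat).
Hypothesis U0 : 0 <= U.
Hypothesis a0 : (0 < a)%N.
Hypothesis hU : forall w, (norm0 w <= a)%N -> nA w <= U * norm2 md w.

Lemma block_direct (v : 'cV[F]_n) (W : {set 'I_n}) M : (#|W| <= a)%N -> 0 <= M ->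
  (forall i, i \in W -> md (v i ord0) <= M) ->
  nA (res W v) <= U * (Num.sqrt a%:R * M).
Proof.
move=> Wa M0 HM.
apply: (le_trans (hU _)); first exact: leq_trans (norm0_res _ _) Wa.
apply: ler_wpM2l => //; rewrite norm2_res; apply: sqrt_le.
  by rewrite mulr_ge0 ?sqrtr_ge0.
rewrite exprMn sqr_sqrtr ?ler0n //.
apply: (@le_trans _ _ (\sum_(i in W) M ^+ 2)).
  apply: ler_sum => i iW; have := HM i iW; have := md_ge0 (v i ord0); nra.
rewrite sumr_const mulrC ?mulr1 ?mul1r.
apply: (le_trans (ler_wpMn2l (sqr_ge0 M) Wa)); by rewrite mulr_natr.
Qed.

Lemma block (v : 'cV[F]_n) : forall (W : {set 'I_n}) M, 0 <= M ->
  (forall i, i \in W -> md (v i ord0) <= M) ->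
  nA (res W v) <= U * (Num.sqrt a%:R * M + (\sum_(i in W) md (v i ord0)) / Num.sqrt a%:R).
Proof.
have sa0 : 0 < Num.sqrt (a%:R : R) by rewrite sqrtr_gt0 ltr0n.
move=> W; have [k Hk] : exists k, (#|W| <= k)%N by exists #|W|.
elim: k W Hk => [|k IH] W Hk M M0 HM.
  apply: (le_trans (block_direct (leq_trans Hk (leq0n a)) M0 HM)).
  apply: ler_wpM2l => //; rewrite lerDl divr_ge0 ?sumr_ge0 // ?ltW //.
case: (leqP #|W| a) => Wa.
  apply: (le_trans (block_direct Wa M0 HM)).
  apply: ler_wpM2l => //; rewrite lerDl divr_ge0 ?sumr_ge0 // ?ltW //.
have [T [TW cT Tmax _]] := top_exists (fun i => md (v i ord0)) W a.
have cTa : #|T| = a by rewrite cT; apply/minn_idPl; exact: ltnW.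
rewrite (res_split v TW).
apply: (le_trans (nA_add _ _)).
have H1 := block_direct (W := T) (v := v) (M := M) (eq_leq cTa) M0
   (fun i iT => HM i (fintype.subsetP TW i iT)).
pose M' := (\sum_(j in T) md (v j ord0)) / a%:R.
have M'0 : 0 <= M' by rewrite divr_ge0 ?sumr_ge0.
have HM' : forall i, i \in W :\: T -> md (v i ord0) <= M'.
  move=> i; rewrite inE => /andP[iT iW].
  have := top_bound TW cT Tmax iW iT.
  rewrite /M' ler_pdivlMr ?ltr0n // mulrC; exact.
have cW' : (#|W :\: T| <= k)%N.
  rewrite cardsD (finset.setIidPr TW) cTa; lia.
have H2 := IH _ cW' M' M'0 HM'.
have ES : \sum_(i in W) md (v i ord0) =
   \sum_(i in T) md (v i ord0) + \sum_(i in W :\: T) md (v i ord0).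
  by rewrite (big_setID T) /= (finset.setIidPr TW).
have EM : Num.sqrt a%:R * M' = (\sum_(j in T) md (v j ord0)) / Num.sqrt a%:R.
  rewrite /M' -{2}(sqr_sqrtr (ler0n _ a)); field.
  by rewrite gt_eqF.
rewrite ES; move: H1 H2; rewrite EM; set s1 := \sum_(j in T) _; set s2 := \sum_(j in _ :\: _) _.
move=> H1 H2; rewrite mulrDl; lra.
Qed.

End WithA.

Lemma dist2_le n (x y : 'cV[F]_n) c : md c = 1 -> dist2 md x y <= norm2 md (x - c *: y).
Proof.
move=> hc; rewrite /dist2; apply: ge_inf; last by exists c.
by exists 0 => d [c' [_ ->]]; exact: norm2_ge0.
Qed.

Lemma dist2_ge n (x y : 'cV[F]_n) t :
  (forall c, md c = 1 -> t <= norm2 md (x - c *: y)) -> t <= dist2 md x y.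
Proof.
move=> H; rewrite /dist2; apply: lb_le_inf.
  by exists (norm2 md (x - 1 *: y)); exists 1.
by move=> d [c [hc ->]]; exact: H.
Qed.

Lemma dist1_le n (x y : 'cV[F]_n) c : md c = 1 -> dist1 md x y <= norm1 md (x - c *: y).
Proof.
move=> hc; rewrite /dist1; apply: ge_inf; last by exists c.
by exists 0 => d [c' [_ ->]]; exact: norm1_ge0.
Qed.

Lemma dist1_ge n (x y : 'cV[F]_n) t :
  (forall c, md c = 1 -> t <= norm1 md (x - c *: y)) -> t <= dist1 md x y.
Proof.
move=> H; rewrite /dist1; apply: lb_le_inf.
  by exists (norm1 md (x - 1 *: y)); exists 1.
by move=> d [c [hc ->]]; exact: H.
Qed.

Lemma norm0_0 n : norm0 (0 : 'cV[F]_n) = 0%N.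
Proof.
rewrite /norm0; apply/eqP; rewrite cards_eq0; apply/eqP/setP => i.
by rewrite !inE mxE eqxx.
Qed.

Lemma sigma1_ge k n (x : 'cV[F]_n) t :
  (forall z c, (norm0 z <= k)%N -> md c = 1 -> t <= norm1 md (x - c *: z)) ->
  t <= sigma1 md k x.
Proof.
move=> H; rewrite /sigma1; apply: lb_le_inf.
  by exists (dist1 md x 0); exists 0; rewrite norm0_0.
move=> d [z [hz ->]]; apply: dist1_ge => c hc; exact: H.
Qed.

Lemma dist2_0 n (w : 'cV[F]_n) : dist2 md w 0 = norm2 md w.
Proof.
apply/le_anti/andP; split.
  by have := dist2_le w 0 md1; rewrite scaler0 subr0.
by apply: dist2_ge => c _; rewrite scaler0 subr0.
Qed.

Lemma key_entry (p q s t : F) :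
  `|md p - md s| <= `|md (p + q) - md (s + t)| + md q + md t.
Proof.
have h1 : md p <= md (p + q) + md q.
  by have := mdD (p + q) (- q); rewrite addrK mdN.
have h2 : md (s + t) <= md s + md t by exact: mdD.
have h3 : md s <= md (s + t) + md t.
  by have := mdD (s + t) (- t); rewrite addrK mdN.
have h4 : md (p + q) <= md p + md q by exact: mdD.
have h5 := ler_norm (md (p + q) - md (s + t)).
have h6 : - (md (p + q) - md (s + t)) <= `|md (p + q) - md (s + t)|.
  by rewrite -normrN ler_norm.
rewrite ler_norml; apply/andP; split; lra.
Qed.

Lemma l2_abs (I : finType) (f : I -> R) : l2 f = l2 (fun i => `|f i|).
Proof. by rewrite /l2; congr Num.sqrt; apply: eq_bigr => i _; rewrite real_normK ?num_real. Qed.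

Lemma key_vec m (P Q S T : 'cV[F]_m) :
  rnorm2 (vabs md P - vabs md S) <=
  rnorm2 (vabs md (P + Q) - vabs md (S + T)) + rnorm2 (vabs md Q) + rnorm2 (vabs md T).
Proof.
rewrite !rnorm2E (l2_abs (fun i => (vabs md (P + Q) - vabs md (S + T)) i ord0)).
set X := (fun i => `|(vabs md (P + Q) - vabs md (S + T)) i ord0|).
set Y := (fun i => vabs md Q i ord0).
set Z := (fun i => vabs md T i ord0).
apply: (@le_trans _ _ (l2 (fun i => X i + Y i + Z i))); last first.
  apply: le_trans (l2D _ _) _; rewrite lerD2r; exact: l2D.
rewrite (l2_abs (fun i => (vabs md P - vabs md S) i ord0)).
apply: l2_le0 => i; apply/andP; split; first exact: normr_ge0.
rewrite /X /Y /Z !mxE; exact: key_entry.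
Qed.

Lemma sum_splitC (I : finType) (f : I -> R) (T : {set I}) :
  \sum_i f i = \sum_(i in T) f i + \sum_(i in ~: T) f i.
Proof.
rewrite (bigID (mem T)) /=; congr (_ + _); apply: eq_bigl => i; rewrite ?inE //.
Qed.

Lemma sum_sub_le (I : finType) (f : I -> R) (A C : {set I}) :
  (forall i, 0 <= f i) -> A \subset C -> \sum_(i in A) f i <= \sum_(i in C) f i.
Proof.
move=> f0 AC; rewrite [X in X <= _]big_mkcond [X in _ <= X]big_mkcond /=; apply: ler_sum => i _.
case iA : (i \in A); case iC : (i \in C) => //.
by move/fintype.subsetP: AC => /(_ i); rewrite iA iC => /(_ isT).
Qed.

Lemma sum_disj_le (I : finType) (f : I -> R) (A B C : {set I}) :
  (forall i, 0 <= f i) -> A \subset C -> B \subset C -> A :&: B = finset.set0 ->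
  \sum_(i in A) f i + \sum_(i in B) f i <= \sum_(i in C) f i.
Proof.
move=> f0 AC BC AB.
rewrite [X in X + _ <= _]big_mkcond [X in _ + X <= _]big_mkcond [X in _ <= X]big_mkcond -big_split /=.
apply: ler_sum => i _.
have hA := fintype.subsetP AC i; have hB := fintype.subsetP BC i.
have hAB : i \in A -> i \in B -> False.
  move=> iA iB; have : i \in A :&: B by rewrite inE iA iB.
  by rewrite AB inE.
case iA : (i \in A); case iB : (i \in B); case iC : (i \in C) => //=;
  rewrite ?addr0 ?add0r //.
- by exfalso; apply: hAB.
- by exfalso; apply: hAB.
- by have := hA iA; rewrite iC.
- by have := hB iB; rewrite iC.
Qed.


Lemma vabs0 m : vabs md (0 : 'cV[F]_m) = 0.
Proof. by apply/matrixP => i j; rewrite !mxE md0. Qed.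

Theorem main_claim : corollary_claim md.
Proof.
rewrite /corollary_claim.
move=> m n k r L U A /andP[k1 kn] r0 L0 U0 hbl hr; cbv zeta.
move=> x eta e xs eta0 he [hxs hmin].
have kpos : (0 < k%:R :> R) by rewrite ltr0n.
have k1R : (1 <= k%:R :> R) by rewrite ler1n.
pose sk := Num.sqrt (k%:R : R).
have sk0 : 0 < sk by rewrite sqrtr_gt0.
pose a := (Num.truncn (r * k%:R)).+1.
have ha1 : r * k%:R <= a%:R.
  by rewrite /a; apply: ltW; exact: truncnS_gt.
have ha2 : (a%:R : R) <= r * k%:R + 1.
  rewrite /a -addn1 natrD lerD2r; rewrite truncn_le.
  by rewrite mulr_ge0 // ltW.
have a0 : (0 < a)%N by [].
clearbody a.
have hX0 : forall w : 'cV[F]_n, (norm0 w <= 2 * k + a)%N ->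
    (norm0 w)%:R <= (r + 4) * k%:R.
  move=> w hw /=; apply: (le_trans (y := (2 * k + a)%N%:R)); first by rewrite ler_nat.
  rewrite natrD natrM; lra.
have hXz : (norm0 (0 : 'cV[F]_n))%:R <= (r + 4) * k%:R.
  by apply: hX0; rewrite norm0_0.
have hU : forall w, (norm0 w <= 2 * k + a)%N -> nA A w <= U * norm2 md w.
  move=> w hw; have := hbl w 0 (hX0 w hw) hXz.
  case/andP => _; rewrite mulmx0 vabs0 subr0 dist2_0; exact.
have hUa : forall w, (norm0 w <= a)%N -> nA A w <= U * norm2 md w.
  by move=> w hw; apply: hU; apply: leq_trans hw _; rewrite leq_addl.
have hUk : forall w, (norm0 w <= k)%N -> nA A w <= U * norm2 md w.
  by move=> w hw; apply: hU; apply: leq_trans hw _; rewrite mul2n -addnn -addnA leq_addr.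
have LU : L <= U.
  have i0 : 'I_n by apply: (Ordinal (n := n) (m := 0)); exact: leq_trans k1 kn.
  pose ev : 'cV[F]_n := \col_i (if i == i0 then 1 else 0).
  have hev : (norm0 ev <= 2 * k + a)%N.
    apply: (@leq_trans 1); last by rewrite addn_gt0 a0 orbT.
    rewrite /norm0; apply: (@leq_trans #|[set i0]|); last by rewrite cards1.
    apply: subset_leq_card; apply/fintype.subsetP => i.
    by rewrite !inE mxE; case: (i == i0); rewrite ?eqxx.
  have /andP[h1 h2] := hbl ev 0 (hX0 ev hev) hXz.
  have hpos : 0 < dist2 md ev 0.
    rewrite dist2_0; apply: (@lt_le_trans _ _ 1) => //.
    rewrite /norm2 -sqrtr1; apply: sqrt_mono.
    rewrite (bigD1 i0) //= mxE eqxx md1 expr1n lerDl.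
    by apply: sumr_ge0 => i _; exact: sqr_ge0.
  by rewrite -(ler_pM2r hpos); apply: le_trans h2.
pose fx := fun i => md (x i ord0).
pose fs := fun i => md (xs i ord0).
have fx0 : forall i, 0 <= fx i by move=> i; exact: md_ge0.
have fs0 : forall i, 0 <= fs i by move=> i; exact: md_ge0.
have [T0 [_ cT0 _ T0max]] := top_exists fx [set: 'I_n] k.
have cT0k : #|T0| = k by rewrite cT0 cardsT card_ord; apply/minn_idPl.
have [T1 [T1W cT1 T1sw _]] := top_exists fs (~: T0) a.
have [T2 [T2W cT2 T2sw _]] := top_exists fx (~: T0) k.
pose S := T0 :|: T1 :|: T2.
have T0S : T0 \subset S by rewrite /S -finset.setUA finset.subsetUl.
have T1S : T1 \subset S by rewrite /S -finset.setUA finset.subsetU // finset.subsetUl orbT.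
have T2S : T2 \subset S by rewrite /S finset.subsetUr.
have ScT0 : ~: S \subset ~: T0 by rewrite finset.setCS.
have T1Sc : T1 :&: ~: S = finset.set0.
  by apply/finset.setP => i; rewrite finset.in_setI finset.in_setC finset.in_set0; case iT1 : (i \in T1) => //=; rewrite (fintype.subsetP T1S i iT1).
have T2Sc : T2 :&: ~: S = finset.set0.
  by apply/finset.setP => i; rewrite finset.in_setI finset.in_setC finset.in_set0; case iT2 : (i \in T2) => //=; rewrite (fintype.subsetP T2S i iT2).
pose sig' := \sum_(i in ~: T0) fx i.
pose Z := \sum_(i in ~: T0) fs i.
have sig'0 : 0 <= sig' by apply: sumr_ge0.
have Z0 : 0 <= Z by apply: sumr_ge0.
have hsig : sig' <= sigma1 md k x.
  apply: sigma1_ge => z c hz hc.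
  pose Zs := [set i | z i ord0 != 0].
  have [T [ZsT _ cT]] : exists T : {set 'I_n}, [/\ Zs \subset T, T \subset [set: 'I_n] & #|T| = k].
    by apply: ext_subset; [exact: finset.subsetT | rewrite hz cardsT card_ord kn].
  have cTk : #|T| = minn k #|[set: 'I_n]| by rewrite cT cardsT card_ord; apply/esym/minn_idPl.
  have hT := T0max T (finset.subsetT T) cTk.
  have e1 := sum_splitC fx T0.
  have e2 := sum_splitC fx T.
  have h3 : \sum_(i in ~: T) fx i <= norm1 md (x - c *: z).
    rewrite /norm1 (sum_splitC _ T).
    apply: (@le_trans _ _ (\sum_(i in ~: T) md ((x - c *: z) i ord0))).
      apply: ler_sum => i; rewrite inE => iT.
      have : i \notin Zs by apply: contra iT; exact: (fintype.subsetP ZsT).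
      rewrite inE negbK => /eqP z0.
      by rewrite !mxE z0 mulr0 subr0.
    by rewrite lerDr; apply: sumr_ge0.
  rewrite /sig'; lra.
have hxfeas : rnorm2 (vabs md (A *m x) - (vabs md (A *m x) + e)) <= eta.
  by rewrite opprD addrA subrr add0r rnorm2N.
have hnorm1 := hmin x hxfeas.
have hmeas : rnorm2 (vabs md (A *m xs) - vabs md (A *m x)) <= 2 * eta.
  have E : vabs md (A *m xs) - vabs md (A *m x) =
      (vabs md (A *m xs) - (vabs md (A *m x) + e)) + e.
    by rewrite opprD addrA subrK.
  rewrite E; apply: le_trans (rnorm2D _ _) _; lra.
pose Dc := fun c => norm2 md (res S xs - c *: res S x).
have hcone : forall c, md c = 1 -> Z <= sk * Dc c + sig'.
  move=> c hc.
  have e1 : norm1 md xs = \sum_(i in T0) fs i + Z := sum_splitC fs T0.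
  have e2 : norm1 md x = \sum_(i in T0) fx i + sig' := sum_splitC fx T0.
  have h3 : \sum_(i in T0) fx i <=
      \sum_(i in T0) fs i + \sum_(i in T0) md (xs i ord0 - c * x i ord0).
    rewrite -big_split; apply: ler_sum => i _ /=.
    have -> : fx i = md (c * x i ord0) by rewrite mdM hc mul1r.
    have := mdD (xs i ord0) (- (xs i ord0 - c * x i ord0)).
    rewrite mdN opprB.
    have -> : xs i ord0 + (c * x i ord0 - xs i ord0) = c * x i ord0 by rewrite addrC subrK.
    done.
  have h4 : \sum_(i in T0) md (xs i ord0 - c * x i ord0) <= sk * Dc c.
    apply: (le_trans (l1_l2 (f := fun i => md (xs i ord0 - c * x i ord0)) T0 (fun i => md_ge0 _))).
    rewrite cT0k; apply: ler_wpM2l; first exact: ltW.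
    rewrite /Dc -res_lin norm2_res; apply: sqrt_mono.
    apply: le_trans (sum_sub_le _ T0S) => [|i]; last exact: sqr_ge0.
    by apply: ler_sum => i _; rewrite !mxE.
  lra.
pose d := dist2 md (res S xs) (res S x).
have d0 : 0 <= d by apply: dist2_ge => c _; exact: norm2_ge0.
have hZ : Z <= sk * d + sig'.
  have : (Z - sig') / sk <= d.
    apply: dist2_ge => c hc; rewrite ler_pdivrMr //.
    have := hcone c hc; rewrite /Dc; lra.
  rewrite ler_pdivrMr //; lra.
have cS : (#|S| <= 2 * k + a)%N.
  rewrite /S; apply: (leq_trans (leq_card_setU _ _)).
  have := leq_card_setU T0 T1.
  have : (#|T1| <= a)%N by rewrite cT1 geq_minl.
  have : (#|T2| <= k)%N by rewrite cT2 geq_minl.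
  rewrite cT0k => h1 h2 h3.
  apply: (leq_trans (leq_add h3 h1)).
  by rewrite mul2n -addnn addnAC leq_add2l.
have hSxs := hX0 _ (leq_trans (norm0_res S xs) cS).
have hSx := hX0 _ (leq_trans (norm0_res S x) cS).
have /andP[hL _] := hbl _ _ hSxs hSx.
have hkey : rnorm2 (vabs md (A *m res S xs) - vabs md (A *m res S x)) <=
    rnorm2 (vabs md (A *m xs) - vabs md (A *m x)) + nA A (res (~: S) xs) + nA A (res (~: S) x).
  have := key_vec (A *m res S xs) (A *m res (~: S) xs) (A *m res S x) (A *m res (~: S) x).
  by rewrite -!mulmxDr -!res_compl.
pose MS := (\sum_(j in T1) fs j) / a%:R.
have MS0 : 0 <= MS by rewrite divr_ge0 ?sumr_ge0.
have HMS : forall i, i \in ~: S -> md (xs i ord0) <= MS.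
  move=> i iS.
  have iT0 : i \in ~: T0 by exact: (fintype.subsetP ScT0).
  have iT1 : i \notin T1.
    apply/negP => iT1; have : i \in T1 :&: ~: S by rewrite finset.in_setI iT1 iS.
    by rewrite T1Sc finset.in_set0.
  have := top_bound T1W cT1 T1sw iT0 iT1.
  rewrite /MS ler_pdivlMr ?ltr0n // mulrC; exact.
have sa0 : 0 < Num.sqrt (a%:R : R) by rewrite sqrtr_gt0 ltr0n.
have hbxs : nA A (res (~: S) xs) <= U * (Z / Num.sqrt a%:R).
  have := block (ltW U0) a0 hUa MS0 HMS.
  have EM : Num.sqrt a%:R * MS = (\sum_(j in T1) fs j) / Num.sqrt a%:R.
    rewrite /MS -{2}(sqr_sqrtr (ler0n _ a)); field.
    by rewrite gt_eqF.
  rewrite EM => h; apply: (le_trans h); rewrite ler_pM2l //.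
  rewrite -mulrDl ler_pM2r ?invr_gt0 //.
  by apply: sum_disj_le.
pose MX := (\sum_(j in T2) fx j) / k%:R.
have MX0 : 0 <= MX by rewrite divr_ge0 ?sumr_ge0.
have HMX : forall i, i \in ~: S -> md (x i ord0) <= MX.
  move=> i iS.
  have iT0 : i \in ~: T0 by exact: (fintype.subsetP ScT0).
  have iT2 : i \notin T2.
    apply/negP => iT2; have : i \in T2 :&: ~: S by rewrite finset.in_setI iT2 iS.
    by rewrite T2Sc finset.in_set0.
  have := top_bound T2W cT2 T2sw iT0 iT2.
  rewrite /MX ler_pdivlMr ?ltr0n // mulrC; exact.
have hbx : nA A (res (~: S) x) <= U * (sig' / sk).
  have := block (ltW U0) k1 hUk MX0 HMX.
  have EM : Num.sqrt k%:R * MX = (\sum_(j in T2) fx j) / sk.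
    rewrite /MX /sk -{2}(sqr_sqrtr (ler0n _ k)); field.
    by rewrite gt_eqF.
  rewrite EM => h; apply: (le_trans h); rewrite ler_pM2l //.
  rewrite -mulrDl ler_pM2r ?invr_gt0 //.
  by apply: sum_disj_le.
have htxs : norm2 md (res (~: S) xs) <= Z / Num.sqrt a%:R.
  rewrite norm2_res; apply: sqrt_le; first by rewrite divr_ge0 // ltW.
  apply: (le_trans (sq_bound (f := fs) (M := MS) _)).
    by move=> i iS; rewrite fs0 HMS.
  have hp := sum_disj_le fs0 T1W ScT0 T1Sc.
  have p0 : 0 <= \sum_(j in T1) fs j by apply: sumr_ge0.
  have q0 : 0 <= \sum_(j in ~: S) fs j by apply: sumr_ge0.
  rewrite expr_div_n sqr_sqrtr ?ler0n // /MS mulrAC ler_pM2r ?invr_gt0 ?ltr0n //.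
  rewrite -/Z in hp; nra.
have htx : norm2 md (res (~: S) x) <= sig' / sk.
  rewrite norm2_res; apply: sqrt_le; first by rewrite divr_ge0 // ltW.
  apply: (le_trans (sq_bound (f := fx) (M := MX) _)).
    by move=> i iS; rewrite fx0 HMX.
  have hp := sum_disj_le fx0 T2W ScT0 T2Sc.
  have p0 : 0 <= \sum_(j in T2) fx j by apply: sumr_ge0.
  have q0 : 0 <= \sum_(j in ~: S) fx j by apply: sumr_ge0.
  rewrite expr_div_n sqr_sqrtr ?ler0n // /MX mulrAC ler_pM2r ?invr_gt0 ?ltr0n //.
  rewrite -/sig' in hp; nra.
have hdist2 : dist2 md xs x <= d + Z / Num.sqrt a%:R + sig' / sk.
  have : dist2 md xs x - (Z / Num.sqrt a%:R + sig' / sk) <= d.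
    apply: dist2_ge => c hc.
    have E : xs - c *: x = (res S xs - c *: res S x) + (res (~: S) xs - c *: res (~: S) x).
      by rewrite {1}(res_compl S xs) {1}(res_compl S x) scalerDr opprD addrACA.
    have h := dist2_le xs x hc; rewrite E in h.
    have h2 := norm2D (res S xs - c *: res S x) (res (~: S) xs - c *: res (~: S) x).
    have h3 := norm2D (res (~: S) xs) (- (c *: res (~: S) x)).
    rewrite norm2N norm2Z // in h3.
    lra.
  lra.
have hdist1 : dist1 md xs x <= 2 * sk * d + 2 * sig'.
  have : (dist1 md xs x - 2 * sig') / (2 * sk) <= d.
    apply: dist2_ge => c hc; rewrite ler_pdivrMr ?mulr_gt0 //.
    have h := dist1_le xs x hc.
    have e1 : \sum_i md ((xs - c *: x) i ord0) =
      \sum_(i in T0) md ((xs - c *: x) i ord0) + \sum_(i in ~: T0) md ((xs - c *: x) i ord0)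
      := sum_splitC (fun i => md ((xs - c *: x) i ord0)) T0.
    have h4 : \sum_(i in T0) md ((xs - c *: x) i ord0) <= sk * Dc c.
      apply: (le_trans (l1_l2 (f := fun i => md ((xs - c *: x) i ord0)) T0 (fun i => md_ge0 _))).
      rewrite cT0k; apply: ler_wpM2l; first exact: ltW.
      rewrite /Dc -res_lin norm2_res; apply: sqrt_mono.
      by apply: le_trans (sum_sub_le _ T0S) => [|i]; last exact: sqr_ge0.
    have h5 : \sum_(i in ~: T0) md ((xs - c *: x) i ord0) <= Z + sig'.
      rewrite /Z /sig' -big_split; apply: ler_sum => i _ /=.
      rewrite !mxE; apply: (le_trans (mdD _ _)).
      by rewrite mdN mdM hc mul1r.
    have h6 := hcone c hc.
    rewrite /norm1 in h; rewrite /Dc in h4 h6; lra.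
  rewrite ler_pdivrMr ?mulr_gt0 //; lra.
have ha2' : (a%:R : R) <= r * k%:R + k%:R by lra.
have h1 : L * d <= 2 * eta + U * Z / Num.sqrt a%:R + U * sig' / sk.
  rewrite -!mulrA; lra.
exact: (final_alg k1R r0 L0 U0 hr ha1 ha2' eta0 sig'0 hsig d0 Z0 h1 hZ hdist2 hdist1 LU).
Qed.






End Gen.

Unset Implicit Arguments.

Theorem corollary2p4 (R : realType) :
  corollary_claim (F := R) (@Num.norm _ R) /\
  corollary_claim (F := R[i]) (@Normc.normc R).
Proof.
split.
- apply: main_claim.
  + exact: normr0.
  + exact: normrN.
  + exact: ler_normD.
  + exact: normrM.
  + exact: normr_ge0.
  + exact: normr1.
- apply: main_claim.
  + exact: Normc.normc0.
  + exact: normcN.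
  + exact: le_normcD.
  + exact: Normc.normcM.
  + by case=> a b /=; exact: sqrtr_ge0.
  + exact: Normc.normc1.
Qed.
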